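(* Let $G_{\mathit{di}}$ be a knowledge connectivity graph whose sink component (vertex set $V_{\mathit{sink}}$) contains at least $2f+1$ correct processes. If the slices of the processes are defined by the slice construction below, then every correct process $i\in W$ has at least one quorum $Q$ composed entirely of correct processes, i.e. $i\in Q\subseteq W$.
   Context: Processes and faults: $\Pi$ is a finite set of processes, $f\ge0$ a known integer; $W\subseteq\Pi$ is the set of correct processes and $F=\Pi\setminus W$ the Byzantine faulty processes, $|F|\le f$. Faulty processes may declare arbitrary slices. Slices and quorums: each process $i$ has a set $\mathcal{S}_i$ of slices (subsets of $\Pi$). $Q\subseteq\Pi$ is a quorum if every $i\in Q$ has some $S\in\mathcal{S}_i$ with $S\subseteq Q$; a quorum of $i$ is a quorum containing $i$. Knowledge graph: each process $i$ is given $\mathit{PD}_i\subseteq\Pi$; the knowledge connectivity graph $G_{\mathit{di}}$ is the directed graph on $\Pi$ with edge $(i,j)$ iff $j\in\mathit{PD}_i$. A sink component is a strongly connected component of $G_{\mathit{di}}$ from which no path leads outside it; $G_{\mathit{di}}$ is assumed to have a unique sink component, with vertex set $V_{\mathit{sink}}$. Slice construction: let $m=\lceil (|V_{\mathit{sink}}|+f+1)/2\rceil$. Every correct $i\in V_{\mathit{sink}}$ has $\mathcal{S}_i=\{S\subseteq V_{\mathit{sink}}: |S|=m\}$. Every correct $i\notin V_{\mathit{sink}}$ is given (by a sink detector) a set $V_i\subseteq V_{\mathit{sink}}$ containing at least $f+1$ correct members of $V_{\mathit{sink}}$, and has $\mathcal{S}_i=\{S\subseteq V_i: |S|=f+1\}$.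 *)

(* Defs.v *)
From mathcomp Require Import all_boot.
Set Implicit Arguments. Unset Strict Implicit. Unset Printing Implicit Defensive.

Definition is_quorum (P : finType) (slices : P -> {set {set P}}) (Q : {set P}) : Prop :=
  forall i, i \in Q -> exists2 S, S \in slices i & S \subset Q.

Definition kedge (P : finType) (PD : P -> {set P}) : rel P :=
  fun i j => j \in PD i.

Definition kreach (P : finType) (PD : P -> {set P}) : rel P :=
  connect (kedge PD).

Definition scc (P : finType) (PD : P -> {set P}) (x : P) : {set P} :=
  [set y | kreach PD x y && kreach PD y x].

Definition is_sink_component (P : finType) (PD : P -> {set P}) (C : {set P}) : Prop :=
  (exists x, C = scc PD x) /\
  (forall x y, x \in C -> kreach PD x y -> y \in C).

(* m = ceil((|V_sink| + f + 1) / 2) *)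
Definition slice_size (n f : nat) : nat := (n + f + 2) %/ 2.

(* Main.v *)
Require Import Defs.
From mathcomp Require Import all_boot.
From mathcomp Require Import zify.

Lemma sub_of_card (P : finType) (A : {set P}) k :
  k <= #|A| -> exists2 S : {set P}, S \subset A & #|S| = k.
Proof.
elim: k => [_|k IH Hk]; first by exists set0; rewrite ?sub0set ?cards0.
have [S SA cS] := IH (ltnW Hk).
have : ~~ (A \subset S).
  apply/negP => AS; have := subset_leq_card AS; rewrite cS => h.
  by move: Hk; rewrite ltnNge h.
case/subsetPn => x xA xS.
exists (x |: S); first by rewrite subUset sub1set xA SA.
by rewrite cardsU1 xS cS.
Qed.

Theorem theorem4 (P : finType) (f : nat) (W : {set P})
    (PD : P -> {set P}) (slices : P -> {set {set P}}) (Vsink : {set P}) :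
  #|~: W| <= f ->
  is_sink_component PD Vsink ->
  (forall C, is_sink_component PD C -> C = Vsink) ->
  2 * f + 1 <= #|Vsink :&: W| ->
  (forall i, i \in W -> i \in Vsink ->
     slices i = [set S : {set P} | (S \subset Vsink) && (#|S| == slice_size #|Vsink| f)]) ->
  (forall i, i \in W -> i \notin Vsink ->
     exists Vi : {set P},
       [/\ Vi \subset Vsink, f + 1 <= #|Vi :&: W| &
           slices i = [set S : {set P} | (S \subset Vi) && (#|S| == f + 1)]]) ->
  forall i, i \in W ->
    exists Q : {set P}, [/\ is_quorum slices Q, i \in Q & Q \subset W].
Proof.
move=> HF _ _ HC Hin Hout i iW.
set C := Vsink :&: W.
have Hn : #|Vsink| <= #|C| + f.
  rewrite -(cardsID W Vsink) -/C leq_add2l.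
  apply: leq_trans HF; apply: subset_leq_card; apply/subsetP => x.
  by rewrite !inE => /andP[].
have Hm : slice_size #|Vsink| f <= #|C|.
  rewrite /slice_size -ltnS ltn_divLR //.
  move: HC; rewrite -/C => HC. lia.
have CV : C \subset Vsink by rewrite subsetIl.
have CW : C \subset W by rewrite subsetIr.
exists (i |: C); split.
- move=> j; rewrite in_setU1 => /orP[/eqP ->|jC].
  + case: (boolP (i \in Vsink)) => iV.
    * have [S SC cS] := @sub_of_card _ _ _ Hm.
      exists S; last by rewrite subsetU // SC orbT.
      by rewrite Hin // inE cS eqxx andbT (subset_trans SC CV).
    * have [Vi [ViV HVi ->]] := Hout i iW iV.
      have [S SC cS] := @sub_of_card _ _ _ HVi.
      exists S; first by rewrite inE cS eqxx andbT (subset_trans SC) ?subsetIl.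
      apply: subsetU; apply/orP; right; apply: (subset_trans SC).
      by apply: setSI.
  + have [S SC cS] := @sub_of_card _ _ _ Hm.
    exists S; last by rewrite subsetU // SC orbT.
    move: jC; rewrite inE => /andP[jV jW].
    by rewrite Hin // inE cS eqxx andbT (subset_trans SC CV).
- by rewrite setU11.
- by rewrite subUset sub1set iW CW.
Qed.
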